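(* Let $A_1,A_2,B_1,B_2\in\mathbb T$ and let $\boldsymbol\mu$ be a ratio set. Assume $A_1\prec^{\boldsymbol\mu}A_2$, $B_1\prec^{\boldsymbol\mu}B_2$, and $\boldsymbol\mu$ witnesses $B_2$. Then $A_1B_1\prec^{\boldsymbol\mu}A_2B_2$.
   Context: $\mathbb T$ is the field of real grid-based transseries over the totally ordered group $\mathfrak G$ of transmonomials; $\operatorname{mag}T$ is the dominant monomial of $T\ne0$. A ratio set is a finite $\boldsymbol\mu\subset\{\mathfrak g\in\mathfrak G:\mathfrak g\prec1\}$; $\boldsymbol\mu^*$ (resp. $\boldsymbol\mu^+$) is the set of products of zero or more (resp. one or more) elements of $\boldsymbol\mu$. Monomials: $\mathfrak m\prec^{\boldsymbol\mu}\mathfrak n$ iff $\mathfrak m/\mathfrak n\in\boldsymbol\mu^+$. Transseries: $A\prec^{\boldsymbol\mu}B$ iff every $\mathfrak a\in\operatorname{supp}A$ satisfies $\mathfrak a\prec^{\boldsymbol\mu}\mathfrak b$ for some $\mathfrak b\in\operatorname{supp}B$. $\boldsymbol\mu$ witnesses nonzero $T$ iff $\operatorname{supp}T\subseteq(\operatorname{mag}T)\boldsymbol\mu^*$. *)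

(* Defs.v *)
From HB Require Import structures.
From mathcomp Require Import all_boot all_order all_algebra.
From mathcomp Require Import boolp reals.
Set Implicit Arguments. Unset Strict Implicit. Unset Printing Implicit Defensive.
Import Order.TTheory GRing.Theory Num.Theory.
Local Open Scope ring_scope.

(* A totally ordered abelian group, written multiplicatively (the monomial
   group 𝔊).  [og_le m n] is the asymptotic order  m ≼ n. *)
Record ordAbGroup := OrdAbGroup {
  og_car :> eqType;
  og_mul : og_car -> og_car -> og_car;
  og_one : og_car;
  og_inv : og_car -> og_car;
  og_le : rel og_car;
  og_mulA : associative og_mul;
  og_mulC : commutative og_mul;
  og_mul1 : left_id og_one og_mul;
  og_mulV : left_inverse og_one og_inv og_mul;
  og_le_refl : reflexive og_le;
  og_le_anti : antisymmetric og_le;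
  og_le_trans : transitive og_le;
  og_le_total : total og_le;
  og_le_mul : forall a b c, og_le a b -> og_le (og_mul a c) (og_mul b c) }.

Section Transseries.
Variables (R : realType) (G : ordAbGroup).

Local Notation "x ** y" := (og_mul x y) (at level 40, left associativity).
Local Notation one := (og_one G).

Definition og_lt (m n : G) : bool := og_le m n && (m != n).

Definition og_prod (s : seq G) : G := foldr (@og_mul G) one s.

Definition star (mu : seq G) (g : G) : Prop :=
  exists s : seq G, all (mem mu) s /\ g = og_prod s.

Definition plus (mu : seq G) (g : G) : Prop :=
  exists s : seq G, s != [::] /\ all (mem mu) s /\ g = og_prod s.

Definition ratio_set (mu : seq G) : Prop := forall g, g \in mu -> og_lt g one.

(* series = coefficient functions G -> R ; support *)
Definition supp (A : G -> R) (g : G) : Prop := A g != 0.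

Definition grid_based (A : G -> R) : Prop :=
  exists (n : G) (ms : seq G), ratio_set ms /\
    forall g, supp A g -> exists2 r, star ms r & g = n ** r.

Definition is_mag (T : G -> R) (m : G) : Prop :=
  supp T m /\ forall g, supp T g -> og_le g m.

Definition mprec (mu : seq G) (m n : G) : Prop :=
  exists2 u, plus mu u & m = n ** u.

Definition sprec (mu : seq G) (A B : G -> R) : Prop :=
  forall a, supp A a -> exists2 b, supp B b & mprec mu a b.

Definition witnesses (mu : seq G) (T : G -> R) : Prop :=
  (exists g, supp T g) /\
  exists2 m, is_mag T m & forall g, supp T g -> exists2 r, star mu r & g = m ** r.

(* product of series: coefficient at g is the (finite, for grid-based
   series) sum of A a * B b over the pairs (a,b) of support monomials
   with a b = g. *)
Definition pairs_spec (A B : G -> R) (g : G) (s : seq (G * G)) : Prop :=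
  uniq s /\ forall p : G * G,
    p \in s <-> (p.1 ** p.2 = g /\ supp A p.1 /\ supp B p.2).

Definition pairs_of (A B : G -> R) (g : G) : seq (G * G) :=
  match pselect (exists s, pairs_spec A B g s) with
  | left h => projT1 (cid h)
  | right _ => [::]
  end.

Definition smul (A B : G -> R) : G -> R :=
  fun g => \sum_(p <- pairs_of A B g) A p.1 * B p.2.

End Transseries.

(* Main.v *)
Require Import Defs.
From mathcomp Require Import all_boot all_order all_algebra.
From mathcomp Require Import boolp reals.
Set Implicit Arguments. Unset Strict Implicit. Unset Printing Implicit Defensive.

Section G.
Variable G : ordAbGroup.
Local Notation "x ** y" := (@og_mul G x y) (at level 40, left associativity).
Local Notation one := (og_one G).
Local Notation le := (@og_le G).

Lemma leT (x y z : G) : le x y -> le y z -> le x z.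
Proof. exact: og_le_trans. Qed.
Lemma mulA (x y z : G) : x ** (y ** z) = x ** y ** z. Proof. exact: og_mulA. Qed.
Lemma mulC (x y : G) : x ** y = y ** x. Proof. exact: og_mulC. Qed.
Lemma mul1 (x : G) : one ** x = x. Proof. exact: og_mul1. Qed.
Lemma mulr1 (x : G) : x ** one = x. Proof. by rewrite mulC mul1. Qed.
Lemma mulCA (x y z : G) : x ** (y ** z) = y ** (x ** z).
Proof. by rewrite !mulA (mulC x). Qed.
Lemma mulAC (x y z : G) : x ** y ** z = x ** z ** y.
Proof. by rewrite -!mulA (mulC y). Qed.
Lemma mulIr (x y z : G) : x ** z = y ** z -> x = y.
Proof.
move=> h; have := congr1 (fun t => t ** og_inv z) h.
by rewrite -!mulA (mulC z) og_mulV !mulr1.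
Qed.
Lemma le_mulr (x y z : G) : le x y -> le (z ** x) (z ** y).
Proof. by move=> h; rewrite (mulC z) (mulC z); apply: og_le_mul. Qed.
Lemma le1_mul (x t : G) : le t one -> le (x ** t) x.
Proof. by move=> h; have := le_mulr x h; rewrite mulr1. Qed.

Lemma prod_cat (s1 s2 : seq G) : og_prod (s1 ++ s2) = og_prod s1 ** og_prod s2.
Proof. by elim: s1 => [|a s IH] /=; rewrite ?mul1 // /og_prod /= -/(og_prod _) IH mulA. Qed.

Lemma prod_le1 (s : seq G) : (forall a, a \in s -> le a one) -> le (og_prod s) one.
Proof.
elim: s => [|a s IH] h /=; first exact: og_le_refl.
apply: (@leT _ (one ** og_prod s)); last by rewrite mul1; apply: IH => b hb; apply: h; rewrite inE hb orbT.
by apply: og_le_mul; apply: h; rewrite mem_head.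
Qed.

Lemma star_one (mu : seq G) : star mu one.
Proof. by exists [::]. Qed.
Lemma star_mul (mu : seq G) x y : star mu x -> star mu y -> star mu (x ** y).
Proof.
move=> [s1 [h1 ->]] [s2 [h2 ->]]; exists (s1 ++ s2).
by rewrite all_cat h1 h2 prod_cat.
Qed.
Lemma plus_mul (mu : seq G) x y : plus mu x -> star mu y -> plus mu (x ** y).
Proof.
move=> [s1 [n1 [h1 ->]]] [s2 [h2 ->]]; exists (s1 ++ s2).
by rewrite all_cat h1 h2 prod_cat; case: s1 n1 {h1}.
Qed.
Lemma star_le1 (mu : seq G) r : (forall m, m \in mu -> le m one) -> star mu r -> le r one.
Proof.
move=> h [s [hs ->]]; apply: prod_le1 => a ha; apply: h.
by move/allP: hs; apply.
Qed.

Definition pw (m : G) j := og_prod (nseq j m).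
Lemma pwD m a b : pw m (a + b) = pw m a ** pw m b.
Proof. by rewrite /pw nseqD prod_cat. Qed.
Lemma pw_le1 m j : le m one -> le (pw m j) one.
Proof. by move=> h; apply: prod_le1 => a; rewrite mem_nseq => /andP[_ /eqP ->]. Qed.

Lemma decomp (m : G) ms s : all (mem (m :: ms)) s ->
  exists j, exists2 s', all (mem ms) s' & og_prod s = pw m j ** og_prod s'.
Proof.
elim: s => [|a s IH] /=; first by move=> _; exists 0%N, [::] => //; rewrite /pw /= mul1.
case/andP=> ha /IH [j [s' hs' e]].
rewrite /og_prod /= -/(og_prod s) e.
case: (eqVneq a m) => [->|nam].
  by exists j.+1, s' => //; rewrite /pw /= -/(og_prod _) mulA.
exists j, (a :: s'); first by rewrite /= hs' andbT; move: ha; rewrite inE (negbTE nam).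
by rewrite /og_prod /= -/(og_prod _) mulCA.
Qed.

Lemma wb (ms : seq G) : (forall m, m \in ms -> le m one) ->
  forall (n : G) (P : G -> Prop), (forall x, P x -> exists2 r, star ms r & x = n ** r) ->
  (exists x, P x) -> exists2 x, P x & forall y, P y -> le y x.
Proof.
elim: ms => [|m ms IH] hle n P hP [x0 Px0].
  have eq1 : forall x, P x -> x = n.
    move=> x /hP [r [[|a s] [hs e]] ->]; last by [].
    by rewrite e mulr1.
  exists x0 => // y Py; rewrite (eq1 _ Py) (eq1 _ Px0); exact: og_le_refl.
have hm : le m one by apply: hle; rewrite mem_head.
have hms : forall a, a \in ms -> le a one by move=> a ha; apply: hle; rewrite inE ha orbT.
have dec : forall x, P x -> exists j, exists2 y, x = y ** pw m j & exists2 r, star ms r & y = n ** r.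
  move=> x /hP [r [s [hs ->]] ->].
  have [j [s' hs' ->]] := decomp hs.
  exists j, (n ** og_prod s'); first by rewrite -mulA (mulC (og_prod s')).
  by exists (og_prod s') => //; exists s'.
pose S y := (exists j, P (y ** pw m j)) /\ exists2 r, star ms r & y = n ** r.
have [y0 [[j0 Py0] _] y0max] : exists2 y0, S y0 & forall y, S y -> le y y0.
  apply: (IH hms n S); first by move=> y [_ h].
  have [j [y ey hy]] := dec _ Px0.
  by exists y; split => //; exists j; rewrite -ey.
have claim : forall k, exists2 x, P x & (le (y0 ** pw m j0) x /\
    forall z j y, P z -> z = y ** pw m j -> (exists2 r, star ms r & y = n ** r) ->
      (j < k)%N -> le z x).
  elim=> [|k [x Px [hx1 hx2]]].
    by exists (y0 ** pw m j0) => //; split => //; exact: og_le_refl.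
  pose Pk z := P z /\ exists2 y, z = y ** pw m k & exists2 r, star ms r & y = n ** r.
  case: (pselect (exists z, Pk z)) => [ne|none].
    have [xk [Pxk _] xkmax] : exists2 xk, Pk xk & forall y, Pk y -> le y xk.
      apply: (IH hms (n ** pw m k) Pk) => // z [_ [y -> [r hr ->]]].
      by exists r => //; rewrite mulAC.
    case: (boolP (le x xk)) => hxk.
      exists xk => //; split; first exact: (leT hx1 hxk).
      move=> z j y Pz ez hy; rewrite ltnS leq_eqVlt; case/orP=> [/eqP ej|ltj].
        by apply: xkmax; split => //; exists y => //; rewrite -ej.
      exact: (leT (hx2 _ _ _ Pz ez hy ltj) hxk).
    have hxk' : le xk x by case/orP: (og_le_total x xk) => h //; rewrite h in hxk.
    exists x => //; split => // z j y Pz ez hy; rewrite ltnS leq_eqVlt; case/orP=> [/eqP ej|ltj].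
      by apply: (leT _ hxk'); apply: xkmax; split => //; exists y => //; rewrite -ej.
    exact: hx2 Pz ez hy ltj.
  exists x => //; split => // z j y Pz ez hy; rewrite ltnS leq_eqVlt; case/orP=> [/eqP ej|ltj].
    by exfalso; apply: none; exists z; split => //; exists y => //; rewrite -ej.
  exact: hx2 Pz ez hy ltj.
have [x Px [hx1 hx2]] := claim j0.
exists x => // z Pz.
have [j [y ez hy]] := dec _ Pz.
case: (ltnP j j0) => hj; first exact: hx2 Pz ez hy hj.
have Sy : S y by split => //; exists j; rewrite -ez.
apply: (leT _ hx1).
rewrite ez -(subnKC hj) pwD mulA.
apply: (leT _ (le1_mul _ (pw_le1 _ hm))).
by do 2 apply: og_le_mul; exact: y0max.
Qed.
Lemma plus_star (mu : seq G) x : plus mu x -> star mu x.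
Proof. by move=> [s [_ h]]; exists s. Qed.
Lemma ac_eq (x t u m r v : G) :
  x ** t ** u ** (m ** r ** v) = x ** m ** (u ** (t ** (r ** v))).
Proof.
rewrite -!mulA; congr (_ ** _).
by rewrite (mulCA u m) (mulCA t m) (mulCA t u).
Qed.
End G.

Theorem proposition3p8 (R : realType) (G : ordAbGroup) (mu : seq G)
    (A1 A2 B1 B2 : G -> R) :
  grid_based A1 -> grid_based A2 -> grid_based B1 -> grid_based B2 ->
  ratio_set mu ->
  sprec mu A1 A2 -> sprec mu B1 B2 -> witnesses mu B2 ->
  sprec mu (smul A1 B1) (smul A2 B2).
Proof.
move=> _ gA2 _ _ rmu h1 h2 [_ [m [sm mmax] wit]] g.
rewrite /supp /smul /pairs_of; case: pselect => [h|_]; last by rewrite big_nil eqxx.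
case: (cid h) => s [us Hs] /=.
case: s us Hs => [|p s] us Hs; first by rewrite big_nil eqxx.
move=> _.
have [e1 [sa1 sb1]] := (Hs p).1 (mem_head _ _).
have [a2 sa2 [u pu e_a]] := h1 _ sa1.
have [b2 sb2 [v pv e_b]] := h2 _ sb1.
have [r sr e_r] := wit _ sb2.
have [n [ms [rms gms]]] := gA2.
have hle : forall x, x \in ms -> og_le x (og_one G) by move=> x hx; case/andP: (rms _ hx).
have hmu : forall x, x \in mu -> og_le x (og_one G) by move=> x hx; case/andP: (rmu _ hx).
pose P a := supp A2 a /\ exists2 t, star mu t & a2 = og_mul a t.
have [a' [sa' [t st et]] amax] : exists2 a', P a' & forall y, P y -> og_le y a'.
  apply: (wb hle (n := n)); first by move=> x [hx _]; exact: gms.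
  by exists a2; split => //; exists (og_one G); [exact: star_one | rewrite mulr1].
exists (og_mul a' m); last first.
  exists (og_mul u (og_mul t (og_mul r v))).
    by apply: plus_mul => //; apply: star_mul => //; apply: star_mul => //; exact: plus_star.
  by rewrite -e1 e_a e_b e_r et ac_eq.
have spec : pairs_spec A2 B2 (og_mul a' m) [:: (a', m)].
  split => // q; split.
    by rewrite mem_seq1 => /eqP -> /=.
  case: q => x y /= [exy [sx sy]].
  have [t' st' ey] := wit _ sy.
  have e' : og_mul x t' = a'.
    by apply: (@mulIr _ _ _ m); rewrite -exy ey mulAC mulA.
  have Px : P x.
    split => //; exists (og_mul t' t); first exact: star_mul.
    by rewrite et -e' mulA.
  have xa : x = a'.
    apply: og_le_anti; rewrite amax //=.
    by rewrite -e'; apply: le1_mul; exact: star_le1 st'.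
  have tone : t' = og_one G.
    by apply: (@mulIr _ _ _ x); rewrite mulC e' mul1 xa.
  by rewrite ey tone mulr1 xa mem_seq1.
case: pselect => [h'|no]; last by exfalso; apply: no; exists [:: (a', m)].
case: (cid h') => s' [us' Hs'] /=.
have pe : perm_eq s' [:: (a', m)].
  apply: uniq_perm => // q; apply/idP/idP => hq.
    exact/(spec.2 q).2/(Hs' q).1.
  exact/(Hs' q).2/(spec.2 q).1.
rewrite (perm_big _ pe) big_seq1 /=; apply: GRing.mulf_neq0 => //.
Qed.
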